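(* Let $\mathcal{Z}=\mathcal{Z}_G^{\mathcal{C}}\subset\mathrm{Sym}(p)$ be a cBC-space with respect to an ordered partition $(n_1,\dots,n_r)$ of $p$, let $i\in[r]$, $\alpha\in[d_i]$, and let $A\in\mathrm{Sym}^+(p)$. Let $\{B^{(i)}_1,\dots,B^{(i)}_{q_i}\}$ be a basis of $L_i(\mathcal{Z})$, set $U_t=B^{(i)}_tc^{(i)}_\alpha$ for $t\in[q_i]$, and let $G_{i,\alpha}\in\mathbb{R}^{q_i\times q_i}$ be the Gram matrix $(G_{i,\alpha})_{ts}=\operatorname{tr}(U_tU_s^\top)$. Then $m_{i,\alpha}=\operatorname{rank}G_{i,\alpha}$. Moreover, let $m=m_{i,\alpha}$, and if $m>0$ let $t_1,\dots,t_m\in[q_i]$ be indices such that the principal submatrix $\widetilde G_{i,\alpha}=((G_{i,\alpha})_{t_kt_l})_{k,l\in[m]}$ is nonsingular (e.g. the pivots of a Cholesky decomposition with complete pivoting). Put $U'_k=U_{t_k}$, $\Psi_{i,\alpha}(A)\in\mathbb{R}^{m\times m}$ with $(\Psi_{i,\alpha}(A))_{kl}=\operatorname{tr}(AU'_k(U'_l)^\top)$, $V_{i,\alpha}(A)\in\mathbb{R}^{1\times m}$ with $(V_{i,\alpha}(A))_{1k}=\mu_{i,\alpha}^{-1/2}\operatorname{tr}(Ac^{(i)}_\alpha(U'_k)^\top)$, and $\lambda_{i,\alpha}(A)=\mu_{i,\alpha}^{-1}\operatorname{tr}(Ac^{(i)}_\alpha)$. Then $\{U'_1,\dots,U'_m\}$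 is a basis of $\mathfrak{h}_{i,\alpha}$, $\Psi_{i,\alpha}(A)$ is positive definite, and $$\det\psi_{i,\alpha}(A)=\frac{\det\Psi_{i,\alpha}(A)}{\det\widetilde G_{i,\alpha}},\qquad \frac{\det\phi_{i,\alpha}(A)}{\det\psi_{i,\alpha}(A)}=\lambda_{i,\alpha}(A)-V_{i,\alpha}(A)\Psi_{i,\alpha}(A)^{-1}V_{i,\alpha}(A)^\top.$$ If $m=0$, then (with the convention $\det\psi_{i,\alpha}(A)=1$) $\det\phi_{i,\alpha}(A)/\det\psi_{i,\alpha}(A)=\lambda_{i,\alpha}(A)$.
   Context: Colored graph: $G=(V,E)$ finite simple undirected graph on $V=[p]$ with a coloring $\mathcal{C}$: vertex color classes $V_1,\dots,V_r$, edge color classes partitioning $E$; the extended edge set $\tilde E=E\cup\{\{v\}:v\in V\}$ is colored with loops $\{v\}$ colored by the color of $v$, and $c(v,w)$ denotes the color of $\{v,w\}\in\tilde E$. $\mathcal{Z}_G^{\mathcal{C}}$ is the space of $x\in\mathrm{Sym}(p)$ with $x_{ij}=0$ whenever $i\ne j$, $\{i,j\}\notin E$, and $x_{ij}=x_{kl}$ whenever $\{i,j\},\{k,l\}\in\tilde E$ have $c(i,j)=c(k,l)$. Block notation: for an ordered partition $(n_1,\dots,n_r)$ of $p$, $x\in\mathrm{Sym}(p)$ has blocks $X_{kh}\in\mathbb{R}^{n_k\times n_h}$; $\mathrm{BlockTri}(x)$ keeps blocks with $k\ge h$, $\mathrm{BlockDiag}(x)$ keeps only diagonal blocks. $M_i(\mathcal{Z})=\{x\in\mathcal{Z}: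 X_{kh}=0$ unless $(k,h)=(i,i)\}$, $L_i(\mathcal{Z})=\{x\in\mathcal{Z}: X_{kh}=0$ unless $k>h=i$ or $h>k=i\}$. $\mathcal{Z}$ is a cBC-space if (Z0) $I_p\in\mathcal{Z}$ and $\mathcal{Z}=(\bigoplus_{i\in[r]}M_i(\mathcal{Z}))\oplus(\bigoplus_{i\in[r-1]}L_i(\mathcal{Z}))$; (Z1) $\mathrm{BlockTri}(x)\mathrm{BlockTri}(x)^\top\in\mathcal{Z}$ for all $x\in\mathcal{Z}$; (Z2) $\mathrm{BlockDiag}(x)\mathrm{BlockDiag}(y)\in\mathcal{Z}$ for all $x,y\in\mathcal{Z}$. Structure data: $e^{(i)}$ is the $p\times p$ matrix with $(i,i)$ block $I_{n_i}$ and others $0$; $\{c^{(i)}_\alpha\}_{\alpha\in[d_i]}$ is a Jordan frame of $M_i(\mathcal{Z})$ (a maximal family of nonzero mutually orthogonal idempotents $c^{(i)}_\alpha c^{(i)}_\beta=\delta_{\alpha\beta}c^{(i)}_\alpha$ in $M_i(\mathcal{Z})$ summing to $e^{(i)}$). $\mu_{i,\alpha}=\operatorname{rank}c^{(i)}_\alpha$, $\tilde e^{(i)}_\alpha=c^{(i)}_\alpha/\sqrt{\mu_{i,\alpha}}$, $c^{(i)}_{>\alpha}=\sum_{\beta>\alpha}c^{(i)}_\beta$, $\mathfrak{h}_{i,\alpha}=c^{(i)}_{>\alpha}M_i(\mathcal{Z})c^{(i)}_\alpha\oplus L_i(\mathcal{Z})c^{(i)}_\alpha$, with an orthonormal basis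 $\{\tilde f^{(i)}_\gamma\}_{\gamma\in J_{i,\alpha}}$ for $\langle X,Y\rangle=\operatorname{tr}(XY^\top)$, and $m_{i,\alpha}=\dim\mathfrak{h}_{i,\alpha}$. For $A\in\mathrm{Sym}(p)$ with $m_{i,\alpha}>0$: $\psi_{i,\alpha}(A)$ is the $m_{i,\alpha}\times m_{i,\alpha}$ matrix with entries $\operatorname{tr}(A\tilde f^{(i)}_\gamma(\tilde f^{(i)}_{\gamma'})^\top)$, $v_{i,\alpha}(A)$ the row vector with entries $\operatorname{tr}(A\tilde e^{(i)}_\alpha(\tilde f^{(i)}_\gamma)^\top)$, and $\phi_{i,\alpha}(A)=\begin{bmatrix}\operatorname{tr}(A\tilde e^{(i)}_\alpha\tilde e^{(i)}_\alpha)&v_{i,\alpha}(A)\\ v_{i,\alpha}(A)^\top&\psi_{i,\alpha}(A)\end{bmatrix}$; if $m_{i,\alpha}=0$, $\phi_{i,\alpha}(A)=\operatorname{tr}(A\tilde e^{(i)}_\alpha\tilde e^{(i)}_\alpha)$. *)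

(* Defs.v *)
From mathcomp Require Import all_boot all_order all_algebra.
Set Implicit Arguments. Unset Strict Implicit. Unset Printing Implicit Defensive.
Import Order.TTheory GRing.Theory Num.Theory.
Local Open Scope ring_scope.

Definition simple_graph (p : nat) (E : rel 'I_p) : Prop :=
  (forall v, ~~ E v v) /\ (forall v w, E v w = E w v).

(* {v,w} in the extended edge set E ∪ {{v} : v in V} *)
Definition ext_edge (p : nat) (E : rel 'I_p) (v w : 'I_p) : bool :=
  (v == w) || E v w.

(* Colour of an element of the extended edge set: loops {v} carry the colour
   of the vertex v (vertex palette = inl), genuine edges their edge colour
   (edge palette = inr).  [ecol] is only consulted on edges. *)
Definition gcolor (p : nat) (vcol : 'I_p -> nat) (ecol : 'I_p -> 'I_p -> nat)
  (v w : 'I_p) : nat + nat :=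
  if v == w then inl (vcol v) else inr (ecol v w).

Definition edge_coloring (p : nat) (E : rel 'I_p) (ecol : 'I_p -> 'I_p -> nat) : Prop :=
  forall v w, E v w -> ecol v w = ecol w v.

Definition inZG (R : rcfType) (p : nat) (E : rel 'I_p) (vcol : 'I_p -> nat)
  (ecol : 'I_p -> 'I_p -> nat) (x : 'M[R]_p) : Prop :=
  [/\ x^T = x,
      (forall a b, a != b -> ~~ E a b -> x a b = 0) &
      (forall a b c d, ext_edge E a b -> ext_edge E c d ->
         gcolor vcol ecol a b = gcolor vcol ecol c d -> x a b = x c d)].

(* Blocks are indexed from 0: [blk n a] is the (0-based) index of the block
   containing the row/column index a, i.e. the number of k with
   n_0 + ... + n_k <= a. *)
Definition blk (r : nat) (n : 'I_r -> nat) (p : nat) (a : 'I_p) : nat :=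
  #|[pred k : 'I_r | ((\sum_(l < r | (l <= k)%N) n l)%N <= a)%N]|.

Definition BlockTri (R : rcfType) (r : nat) (n : 'I_r -> nat) (p : nat)
  (x : 'M[R]_p) : 'M[R]_p :=
  \matrix_(a, b) if (blk n b <= blk n a)%N then x a b else 0.

Definition BlockDiag (R : rcfType) (r : nat) (n : 'I_r -> nat) (p : nat)
  (x : 'M[R]_p) : 'M[R]_p :=
  \matrix_(a, b) if blk n a == blk n b then x a b else 0.

Definition inM (R : rcfType) (r : nat) (n : 'I_r -> nat) (p : nat)
  (Z : 'M[R]_p -> Prop) (i : nat) (x : 'M[R]_p) : Prop :=
  Z x /\ forall a b, ~ (blk n a = i /\ blk n b = i) -> x a b = 0.

Definition inL (R : rcfType) (r : nat) (n : 'I_r -> nat) (p : nat)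
  (Z : 'M[R]_p -> Prop) (i : nat) (x : 'M[R]_p) : Prop :=
  Z x /\ forall a b,
    ~ ((blk n b = i /\ (blk n b < blk n a)%N) \/ (blk n a = i /\ (blk n a < blk n b)%N)) ->
    x a b = 0.

Definition eblk (R : rcfType) (r : nat) (n : 'I_r -> nat) (p : nat) (i : nat)
  : 'M[R]_p :=
  \matrix_(a, b) ((a == b) && (blk n a == i))%:R.

(* In (Z0) the sum is automatically direct since the
   summands have pairwise disjoint supports; we state the set equality
   Z = (sum of M_i(Z)) + (sum of L_i(Z), i in [r-1]) as two inclusions. *)
Definition cBC (R : rcfType) (r : nat) (n : 'I_r -> nat) (p : nat)
  (Z : 'M[R]_p -> Prop) : Prop :=
  [/\ Z 1%:M,
      (forall x, Z x -> exists xs ys : 'I_r -> 'M[R]_p,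
          [/\ forall k : 'I_r, inM n Z k (xs k),
              forall k : 'I_r, (k.+1 < r)%N -> inL n Z k (ys k) &
              x = \sum_(k : 'I_r) xs k + \sum_(k : 'I_r | (k.+1 < r)%N) ys k]),
      (forall xs ys : 'I_r -> 'M[R]_p,
          (forall k : 'I_r, inM n Z k (xs k)) ->
          (forall k : 'I_r, (k.+1 < r)%N -> inL n Z k (ys k)) ->
          Z (\sum_(k : 'I_r) xs k + \sum_(k : 'I_r | (k.+1 < r)%N) ys k)),
      (forall x, Z x -> Z (BlockTri n x *m (BlockTri n x)^T)) &
      (forall x y, Z x -> Z y -> Z (BlockDiag n x *m BlockDiag n y))].

Definition orth_idem_family (R : rcfType) (r : nat) (n : 'I_r -> nat) (p : nat)
  (Z : 'M[R]_p -> Prop) (i : nat) (d : nat) (c : 'I_d -> 'M[R]_p) : Prop :=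
  [/\ forall a, inM n Z i (c a),
      forall a, c a != 0,
      forall a b, c a *m c b = (if a == b then c a else 0) &
      \sum_(a < d) c a = eblk R n p i].

Definition jordan_frame (R : rcfType) (r : nat) (n : 'I_r -> nat) (p : nat)
  (Z : 'M[R]_p -> Prop) (i : nat) (d : nat) (c : 'I_d -> 'M[R]_p) : Prop :=
  orth_idem_family n Z i c /\
  forall d' (c' : 'I_d' -> 'M[R]_p), orth_idem_family n Z i c' -> (d' <= d)%N.

Definition is_basis (R : rcfType) (p : nat) (P : 'M[R]_p -> Prop) (k : nat)
  (f : 'I_k -> 'M[R]_p) : Prop :=
  [/\ forall t, P (f t),
      (forall a : 'I_k -> R, \sum_(t < k) a t *: f t = 0 -> forall t, a t = 0) &
      (forall y, P y -> exists a : 'I_k -> R, y = \sum_(t < k) a t *: f t)].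

Definition is_onbasis (R : rcfType) (p : nat) (P : 'M[R]_p -> Prop) (k : nat)
  (f : 'I_k -> 'M[R]_p) : Prop :=
  is_basis P f /\ forall g g', \tr (f g *m (f g')^T) = (g == g')%:R.

Definition cgt (R : rcfType) (p d : nat) (c : 'I_d -> 'M[R]_p) (al : 'I_d) : 'M[R]_p :=
  \sum_(b < d | (al < b)%N) c b.

Definition inh (R : rcfType) (r : nat) (n : 'I_r -> nat) (p : nat)
  (Z : 'M[R]_p -> Prop) (i : nat) (d : nat) (c : 'I_d -> 'M[R]_p) (al : 'I_d)
  (y : 'M[R]_p) : Prop :=
  exists x z, [/\ inM n Z i x, inL n Z i z & y = cgt c al *m x *m c al + z *m c al].

Definition psi (R : rcfType) (p m : nat) (A : 'M[R]_p) (f : 'I_m -> 'M[R]_p)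
  : 'M[R]_m :=
  \matrix_(g, g') \tr (A *m f g *m (f g')^T).

Definition vrow (R : rcfType) (p m : nat) (A et : 'M[R]_p) (f : 'I_m -> 'M[R]_p)
  : 'rV[R]_m :=
  \row_g \tr (A *m et *m (f g)^T).

(* phi as a (1+m)x(1+m) matrix; for m = 0 it is the 1x1 matrix tr(A e e). *)
Definition phi (R : rcfType) (p m : nat) (A et : 'M[R]_p) (f : 'I_m -> 'M[R]_p)
  : 'M[R]_(1 + m) :=
  block_mx (\tr (A *m et *m et))%:M (vrow A et f) (vrow A et f)^T (psi A f).

Definition posdef (R : rcfType) (k : nat) (S : 'M[R]_k) : Prop :=
  S^T = S /\ forall x : 'cV[R]_k, x != 0 -> 0 < (x^T *m S *m x) 0 0.

(* Main.v *)
Require Import Defs.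
From mathcomp Require Import all_boot all_order all_algebra.
From mathcomp Require Import ring lra.
Set Implicit Arguments. Unset Strict Implicit. Unset Printing Implicit Defensive.
Import Order.TTheory GRing.Theory Num.Theory.
Local Open Scope ring_scope.

Section Helpers.
Variable R : rcfType.
Variable p : nat.

Definition bf (A X Y : 'M[R]_p) : R := \tr (A *m X *m Y^T).
Definition gram (A : 'M[R]_p) {k} (g : 'I_k -> 'M[R]_p) : 'M[R]_k :=
  \matrix_(x, y) bf A (g x) (g y).

Lemma bf_suml A k (a : 'I_k -> R) g Y :
  bf A (\sum_j a j *: g j) Y = \sum_j a j * bf A (g j) Y.
Proof.
rewrite /bf mulmx_sumr mulmx_suml raddf_sum; apply eq_bigr => j _.
by rewrite -scalemxAr -scalemxAl; apply: mxtraceZ.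
Qed.

Lemma bf_sumr A X k (b : 'I_k -> R) g :
  bf A X (\sum_j b j *: g j) = \sum_j b j * bf A X (g j).
Proof.
rewrite /bf linear_sum /= mulmx_sumr raddf_sum; apply eq_bigr => j _.
by rewrite linearZ /= -scalemxAr; apply: mxtraceZ.
Qed.

Lemma bf0l A Y : bf A 0 Y = 0.
Proof. by rewrite /bf mulmx0 mul0mx linear0. Qed.

Lemma bf_sym A X Y : A^T = A -> bf A X Y = bf A Y X.
Proof.
move=> HA; rewrite /bf -mxtrace_tr !trmx_mul trmxK HA.
by rewrite mulmxA mxtrace_mulC mulmxA.
Qed.

Lemma gram_change A k m (f : 'I_m -> 'M[R]_p) (g : 'I_k -> 'M[R]_p)
  (C : 'M[R]_(k, m)) :
  (forall x, g x = \sum_j C x j *: f j) -> gram A g = C *m gram A f *m C^T.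
Proof.
move=> Hg; apply/matrixP => x y; rewrite !mxE Hg bf_suml.
under eq_bigr do rewrite Hg bf_sumr big_distrr.
under [RHS]eq_bigr do rewrite !mxE big_distrl.
rewrite exchange_big /=; apply eq_bigr => j _; apply eq_bigr => l _.
rewrite !mxE; ring.
Qed.

Lemma lin_comb a b (c : 'I_a -> R) (M : 'I_a -> 'I_b -> R) (g : 'I_b -> 'M[R]_p) :
  \sum_j c j *: (\sum_k M j k *: g k) = \sum_k (\sum_j c j * M j k) *: g k.
Proof.
under eq_bigr do rewrite scaler_sumr.
rewrite exchange_big /=; apply eq_bigr => k _; rewrite scaler_suml.
by apply eq_bigr => j _; rewrite scalerA.
Qed.

Lemma sum_delta m (f : 'I_m -> 'M[R]_p) j :
  \sum_k (j == k)%:R *: f k = f j.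
Proof.
rewrite (bigD1 j) //= eqxx scale1r big1 ?addr0 // => k Hk.
by rewrite eq_sym (negbTE Hk) scale0r.
Qed.

Lemma onb_coord (P : 'M[R]_p -> Prop) m (f : 'I_m -> 'M[R]_p) (b : 'I_m -> R) k :
  is_onbasis P f -> bf 1%:M (\sum_j b j *: f j) (f k) = b k.
Proof.
move=> [_ Hon]; rewrite bf_suml.
rewrite (bigD1 k) //= /bf mul1mx Hon eqxx mulr1 big1 ?addr0 // => j Hj.
by rewrite mul1mx Hon (negbTE Hj) mulr0.
Qed.

Lemma onb_expand (P : 'M[R]_p -> Prop) m (f : 'I_m -> 'M[R]_p) y :
  is_onbasis P f -> P y -> y = \sum_j bf 1%:M y (f j) *: f j.
Proof.
move=> Hf Py; have [[_ _ Hsp] _] := Hf.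
have [a Ha] := Hsp y Py.
by rewrite {2}Ha; under eq_bigr do rewrite (onb_coord a _ Hf).
Qed.

Lemma gram_onb (P : 'M[R]_p -> Prop) m (f : 'I_m -> 'M[R]_p) :
  is_onbasis P f -> gram 1%:M f = 1%:M.
Proof.
move=> [_ Hon]; apply/matrixP => x y; by rewrite !mxE /bf mul1mx Hon.
Qed.

Lemma bf_pos (A : 'M[R]_p) W : posdef A -> W != 0 -> 0 < bf A W W.
Proof.
move=> [_ HA] HW.
have Hent : forall j, (W^T *m (A *m W)) j j = ((col j W)^T *m A *m col j W) 0 0.
  move=> j; rewrite !mxE.
  under eq_bigr do rewrite !mxE big_distrr.
  under [RHS]eq_bigr do rewrite !mxE big_distrl.
  rewrite exchange_big /=; apply eq_bigr => k _; apply eq_bigr => l _.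
  rewrite !mxE; ring.
have Hge : forall j, 0 <= ((col j W)^T *m A *m col j W) 0 0.
  move=> j; case: (eqVneq (col j W) 0) => [->|H].
    by rewrite mulmx0 mxE.
  exact: ltW (HA _ H).
case: (pickP (fun b => col b W != 0)) => [b Hb | H].
  rewrite /bf.
  rewrite mxtrace_mulC /mxtrace (bigD1 b) //=.
  under eq_bigr do rewrite Hent.
  rewrite Hent.
  have H1 := HA _ Hb.
  have H2 : 0 <= \sum_(i < p | i != b) ((col i W)^T *m A *m col i W) 0 0.
    by apply: sumr_ge0 => j _; apply: Hge.
  lra.
exfalso; move/negP: HW; apply; apply/eqP/matrixP => a b.
have /negPn/eqP Hc : ~~ (col b W != 0) by rewrite H.
by move: (congr1 (fun M : 'cV_p => M a 0) Hc); rewrite !mxE.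
Qed.

Lemma schur m (a : R) (v : 'rV[R]_m) (P : 'M[R]_m) : P \in unitmx ->
  \det (block_mx a%:M v v^T P) = \det P * (a - (v *m invmx P *m v^T) 0 0).
Proof.
move=> HP.
have -> : block_mx a%:M v v^T P = block_mx 1%:M (v *m invmx P) 0 1%:M *m
    block_mx (a%:M - v *m invmx P *m v^T) 0 v^T P.
  by rewrite mulmx_block ?mul1mx ?mul0mx ?mulmx0 ?addr0 ?add0r subrK mulmxKV.
rewrite det_mulmx det_ublock det_lblock !det1 !mul1r det_mx11 !mxE /=.
by rewrite mulr1n mulrC.
Qed.

End Helpers.
Theorem theorem4p16 (R : rcfType) (p : nat)
  (E : rel 'I_p) (vcol : 'I_p -> nat) (ecol : 'I_p -> 'I_p -> nat)
  (HE : simple_graph E) (Hcol : edge_coloring E ecol)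
  (r : nat) (n : 'I_r -> nat)
  (Hn : forall k, (0 < n k)%N) (Hsum : (\sum_(k < r) n k)%N = p)
  (HZ : cBC n (inZG (R := R) E vcol ecol))
  (i : 'I_r) (d : nat) (c : 'I_d -> 'M[R]_p)
  (Hc : jordan_frame n (inZG E vcol ecol) i c)
  (al : 'I_d)
  (m : nat) (f : 'I_m -> 'M[R]_p)
  (Hf : is_onbasis (inh n (inZG E vcol ecol) i c al) f)
  (A : 'M[R]_p) (HA : posdef A)
  (q : nat) (B : 'I_q -> 'M[R]_p)
  (HB : is_basis (inL n (inZG E vcol ecol) i) B) :
  let U := fun t : 'I_q => B t *m c al in
  let G := \matrix_(t < q, s < q) \tr (U t *m (U s)^T) in
  let mu : R := (\rank (c al))%:R in
  let et := (Num.sqrt mu)^-1 *: c al in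
  let lam := mu^-1 * \tr (A *m c al) in
  m = \rank G /\
  (m = 0%N -> \det (phi A et f) / \det (psi A f) = lam) /\
  (forall t : 'I_m -> 'I_q, (0 < m)%N ->
     let Gt := \matrix_(k < m, l < m) G (t k) (t l) in
     \det Gt != 0 ->
     let U' := fun k : 'I_m => U (t k) in
     let Psi := \matrix_(k < m, l < m) \tr (A *m U' k *m (U' l)^T) in
     let V := \row_(k < m) ((Num.sqrt mu)^-1 * \tr (A *m c al *m (U' k)^T)) in
     [/\ is_basis (inh n (inZG E vcol ecol) i c al) U',
         posdef Psi,
         \det (psi A f) = \det Psi / \det Gt &
         \det (phi A et f) / \det (psi A f) = lam - (V *m invmx Psi *m V^T) 0 0]).
Proof.
move=> U G mu et lam.
have [[Hcin Hcnz Hcorth Hcsum] _] := Hc.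
have [[fin find fspan] fon] := Hf.
have [HBin HBind HBspan] := HB.
have [Z0 Z1 Z1b Z1c HZ2] := HZ.
have Hdiag : forall y : 'M[R]_p, inM n (inZG E vcol ecol) i y -> BlockDiag n y = y.
  move=> y [Hy0 Hy]; apply/matrixP => a b; rewrite mxE; case: eqP => // Hne.
  by symmetry; apply: Hy => -[Ha Hb]; apply: Hne; rewrite Ha Hb.
have Hcom : forall x y : 'M[R]_p, inM n (inZG E vcol ecol) i x ->
    inM n (inZG E vcol ecol) i y -> x *m y = y *m x.
  move=> x y Hx Hy; have [HT _ _] := HZ2 _ _ (proj1 Hx) (proj1 Hy).
  rewrite (Hdiag _ Hx) (Hdiag _ Hy) in HT.
  have [Tx _ _] := proj1 Hx; have [Ty _ _] := proj1 Hy.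
  by rewrite -HT trmx_mul Tx Ty.
have Hcgt : forall x : 'M[R]_p, inM n (inZG E vcol ecol) i x -> cgt c al *m x *m c al = 0.
  move=> x Hx; rewrite /cgt !mulmx_suml big1 // => b Hb.
  rewrite (Hcom _ _ (Hcin b) Hx) -mulmxA Hcorth.
  have -> : (b == al) = false.
    by apply/negbTE; apply/eqP => Hba; rewrite Hba ltnn in Hb.
  by rewrite mulmx0.
have Hin0 : inM n (inZG E vcol ecol) i (0 : 'M[R]_p).
  split; last by move=> *; rewrite mxE.
  split; [by rewrite trmx0 | by move=> *; rewrite mxE | by move=> *; rewrite !mxE].
have HUh : forall s, inh n (inZG E vcol ecol) i c al (U s).
  move=> s; exists 0, (B s); split; [exact: Hin0 | exact: HBin | ].
  by rewrite mulmx0 mul0mx add0r.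
have HhU : forall y : 'M[R]_p, inh n (inZG E vcol ecol) i c al y ->
    exists a : 'I_q -> R, y = \sum_s a s *: U s.
  move=> y [x [z [Hx Hz ->]]]; rewrite Hcgt // add0r.
  have [a ->] := HBspan z Hz; exists a; rewrite mulmx_suml.
  by apply eq_bigr => s _; rewrite -scalemxAl.
have Hphi00 : \tr (A *m et *m et) = lam.
  rewrite /et -!scalemxAr ?scalerA -?scalemxAl ?scalerA -?scalemxAr ?scalerA. rewrite mxtraceZ.
  rewrite -mulmxA Hcorth eqxx -invfM -expr2 sqr_sqrtr ?ler0n //.
split.
  pose D := \matrix_(s, j) bf 1%:M (U s) (f j) : 'M[R]_(q, m).
  have HUexp : forall s, U s = \sum_j D s j *: f j.
    move=> s; rewrite {1}(onb_expand Hf (HUh s)); apply eq_bigr => j _.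
    by rewrite mxE.
  have HG0 : G = gram 1%:M U by apply/matrixP => s s'; rewrite !mxE /bf mul1mx.
  have HG : G = D *m D^T.
    by rewrite HG0 (gram_change 1%:M HUexp) (gram_onb Hf) mulmx1.
  have Hfe : forall j, exists e : 'rV[R]_q, f j = \sum_s e 0 s *: U s.
    move=> j; have [a Ha] := HhU _ (fin j); exists (\row_s a s).
    rewrite {1}Ha; apply eq_bigr => s _; by rewrite mxE.
  have [e He] := fin_all_exists Hfe.
  pose Em := \matrix_(j, s) e j 0 s : 'M[R]_(m, q).
  have HED : Em *m D = 1%:M.
    apply/matrixP => j k; rewrite !mxE.
    transitivity (bf 1%:M (f j) (f k)).
      rewrite (He j) bf_suml; apply eq_bigr => s _; by rewrite !mxE.
    by rewrite /bf mul1mx fon.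
  apply/eqP; rewrite eqn_leq; apply/andP; split.
    have H1 : Em *m G *m Em^T = 1%:M.
      by rewrite HG mulmxA HED mul1mx -trmx_mul HED trmx1.
    rewrite -{1}(mxrank1 R m) -H1.
    apply: leq_trans (mxrankM_maxl _ _) _; exact: mxrankM_maxr.
  rewrite HG; exact: leq_trans (mxrankM_maxr _ _) (rank_leq_row _).
split.
  move=> Hm0; subst m.
  have Hpu : psi A f \in unitmx by rewrite unitmxE det_mx00 unitr1.
  rewrite (schur _ _ Hpu) det_mx00 mul1r divr1 Hphi00.
  by rewrite mxE big_ord0 subr0.
move=> t Hm0 Gt HGt U' Psi V.
pose C := \matrix_(k, j) bf 1%:M (U' k) (f j) : 'M[R]_m.
have HU'h : forall k, inh n (inZG E vcol ecol) i c al (U' k) by move=> k; exact: HUh.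
have HU'exp : forall k, U' k = \sum_j C k j *: f j.
  move=> k; rewrite {1}(onb_expand Hf (HU'h k)); apply eq_bigr => j _.
  by rewrite mxE.
have HGtC : Gt = C *m C^T.
  have -> : Gt = gram 1%:M U' by apply/matrixP => k l; rewrite !mxE /bf mul1mx.
  by rewrite (gram_change 1%:M HU'exp) (gram_onb Hf) mulmx1.
have HdetC : \det C != 0.
  move: HGt; rewrite HGtC det_mulmx det_tr; apply: contra => /eqP ->.
  by rewrite mul0r.
have HCu : C \in unitmx by rewrite unitmxE unitfE.
have HGtu : Gt \in unitmx by rewrite unitmxE unitfE.
have Hind : forall a : 'I_m -> R, \sum_k a k *: U' k = 0 -> forall k, a k = 0.
  move=> a Ha k.
  have Hrow : (\row_k a k) *m Gt = 0.
    apply/matrixP => x l; rewrite !mxE.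
    transitivity (bf 1%:M (\sum_k a k *: U' k) (U' l)); last by rewrite Ha bf0l.
    rewrite bf_suml; apply eq_bigr => k' _; by rewrite !mxE /bf mul1mx.
  have := mulmxK HGtu (\row_k a k); rewrite Hrow mul0mx.
  by move=> /matrixP/(_ 0 k); rewrite !mxE => ->.
have Hspan : forall y : 'M[R]_p, inh n (inZG E vcol ecol) i c al y ->
    exists a : 'I_m -> R, y = \sum_k a k *: U' k.
  move=> y Hy; pose Ci := invmx C.
  have Hfj : forall j, f j = \sum_k Ci j k *: U' k.
    move=> j; under eq_bigr do rewrite HU'exp.
    rewrite lin_comb -{1}(sum_delta f j); apply eq_bigr => j' _.
    have <- : (Ci *m C) j j' = (j == j')%:R by rewrite mulVmx // mxE.
    by rewrite mxE.
  exists (fun k => \sum_j bf 1%:M y (f j) * Ci j k).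
  transitivity (\sum_j bf 1%:M y (f j) *: \sum_k Ci j k *: U' k).
    rewrite {1}(onb_expand Hf Hy); apply eq_bigr => j _; by rewrite -Hfj.
  by rewrite lin_comb.
have HPsi' : Psi = gram A U' by apply/matrixP => k l; rewrite !mxE.
have HPsiC : Psi = C *m psi A f *m C^T.
  by rewrite HPsi' (gram_change A HU'exp).
have HPsiT : Psi^T = Psi.
  apply/matrixP => k l; rewrite !mxE; exact: bf_sym _ _ (proj1 HA).
have Hpos : forall x : 'cV_m, x != 0 -> 0 < (x^T *m Psi *m x) 0 0.
  move=> x Hx; pose W := \sum_k x k 0 *: U' k.
  have HW : W != 0.
    apply/negP => /eqP HW0; move/negP: Hx; apply; apply/eqP/matrixP => k j.
    rewrite (ord1 j) !mxE; exact: (Hind (fun k => x k 0) HW0 k).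
  have HgW : forall y : 'I_1, (fun _ : 'I_1 => W) y = \sum_j x^T y j *: U' j.
    by move=> y; rewrite /W; apply eq_bigr => k _; rewrite mxE (ord1 y).
  have Hg := gram_change A HgW.
  move/matrixP: Hg => /(_ 0 0); rewrite mxE -HPsi' trmxK => <-.
  exact: bf_pos HA HW.
have HdPsi : \det Psi != 0.
  apply/negP => /det0P [v Hv0 HvP].
  have := Hpos v^T; rewrite trmx_eq0 => /(_ Hv0).
  by rewrite trmxK HvP mul0mx mxE ltxx.
have Hdpsi : \det (psi A f) != 0.
  move: HdPsi; rewrite HPsiC !det_mulmx det_tr; apply: contra => /eqP ->.
  by rewrite mulr0 mul0r.
have Hpsiu : psi A f \in unitmx by rewrite unitmxE unitfE.
split; [exact: (And3 HU'h Hind Hspan) | exact: (conj HPsiT Hpos) | | ].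
- rewrite HPsiC HGtC !det_mulmx !det_tr; field.
  exact: HdetC.
rewrite (schur _ _ Hpsiu) Hphi00 mulrC mulrA mulVf // mul1r.
congr (_ - _).
have HV : V = vrow A et f *m C^T.
  apply/matrixP => x k; rewrite (ord1 x).
  transitivity (bf A et (U' k)).
    by rewrite mxE /bf /et -scalemxAr -scalemxAl mxtraceZ.
  rewrite {1}HU'exp bf_sumr mxE; apply eq_bigr => j _; rewrite !mxE mulrC.
  done.
have HX : C^T *m invmx Psi *m C = invmx (psi A f).
  have H1 : C^T *m invmx Psi *m C *m psi A f = 1%:M.
    have HCP : C *m psi A f = Psi *m invmx C^T.
      by rewrite HPsiC mulmxK // unitmx_tr.
    rewrite -mulmxA HCP mulmxA mulmxKV ?mulmxV ?unitmx_tr //.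
    by rewrite unitmxE unitfE.
  by rewrite -[LHS]mulmx1 -(mulmxV Hpsiu) mulmxA H1 mul1mx.
rewrite HV trmx_mul trmxK -HX.
by rewrite !mulmxA.
Qed.
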